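(* Let $\mathcal{H}$ be a separable Hilbert space, $\epsilon_1,\ldots,\epsilon_n$ $\mathcal{H}$-valued random elements with $E\|\epsilon_i\|^2<\infty$, $W_{n1},\ldots,W_{nn}\ge0$ deterministic weights, $\eta_i=W_{ni}\epsilon_i$, $S_n=\sum_{i=1}^n\eta_i$, $\mathcal{G}_i=\sigma(\epsilon_1,\ldots,\epsilon_i)$ ($\mathcal{G}_0$ trivial), and $m\ge1$ an integer. For $1\le i\le n$ let $T_i=S_n-\sum_{j=i}^{\min(i+m-1,n)}\eta_j$ and $d_i=E[\|S_n\|\mid\mathcal{G}_i]-E[\|S_n\|\mid\mathcal{G}_{i-1}]-E[\|T_i\|\mid\mathcal{G}_i]+E[\|T_i\|\mid\mathcal{G}_{i-1}]$. Then $|d_i|\le\sum_{j=i}^{i+m-1}E(\|\eta_j\|\mid\mathcal{G}_i)+\sum_{j=i}^{i+m-1}E(\|\eta_j\|\mid\mathcal{G}_{i-1})$ and $E(d_i^2\mid\mathcal{G}_{i-1})\le m\sum_{j=i}^{i+m-1}E(\|\eta_j\|^2\mid\mathcal{G}_{i-1})$, where sums over $j$ are truncated at $n$. *)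

(* Defs.v *)
From HB Require Import structures.
From mathcomp Require Import all_boot all_order all_algebra.
From mathcomp Require Import all_classical all_reals all_analysis.
Set Implicit Arguments. Unset Strict Implicit. Unset Printing Implicit Defensive.
Import Order.TTheory GRing.Theory Num.Theory.
Import numFieldNormedType.Exports.
Local Open Scope classical_set_scope.
Local Open Scope ring_scope.

Definition norm_from_inner_product (R : realType) (H : normedModType R)
  (ip : H -> H -> R) : Prop :=
  [/\ forall x y, ip x y = ip y x,
      forall (a : R) (x y z : H), ip (a *: x + y) z = a * ip x z + ip y z
    & forall x : H, `|x| ^+ 2 = ip x x].

Definition separable_hilbert (R : realType) (H : completeNormedModType R) : Prop :=
  (exists ip : H -> H -> R, norm_from_inner_product ip) /\
  (exists D : set H, countable D /\ closure D = setT).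

Definition borelH (R : realType) (H : normedModType R) : set (set H) :=
  <<s [set: H], [set U | open U] >>.

Definition random_element (d : measure_display) (T : measurableType d)
  (R : realType) (H : normedModType R) (X : T -> H) : Prop :=
  forall B, borelH B -> measurable (X @^-1` B).

(* sigma(eps_1, ..., eps_i); for i = 0 this is the trivial sigma-algebra. *)
Definition natural_filtration (d : measure_display) (T : measurableType d)
  (R : realType) (H : normedModType R) (eps : nat -> T -> H) (i : nat)
  : set (set T) :=
  <<s [set: T], [set A | exists j B, [/\ (1 <= j <= i)%N, borelH B &
                                         A = eps j @^-1` B] ] >>.

Definition is_cond_exp (d : measure_display) (T : measurableType d)
  (R : realType) (P : probability T R) (G : set (set T)) (X Y : T -> R) : Prop :=
  [/\ forall B : set R, measurable B -> G (Y @^-1` B),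
      P.-integrable [set: T] (EFin \o Y)
    & forall A, G A ->
        (\int[P]_(x in A) (Y x)%:E = \int[P]_(x in A) (X x)%:E)%E].

(* Main.v *)
Require Import Defs.
From HB Require Import structures.
From mathcomp Require Import all_boot all_order all_algebra.
From mathcomp Require Import all_classical all_reals all_analysis.
From mathcomp Require Import ring lra.
From mathcomp Require Import measurable_realfun.
Import Order.TTheory GRing.Theory Num.Theory.
Import numFieldNormedType.Exports.
Local Open Scope classical_set_scope.
Local Open Scope ring_scope.
Set Implicit Arguments. Unset Strict Implicit. Unset Printing Implicit Defensive.

Section OM.
Context d (T : measurableType d) (R : realType) (H : normedModType R).
Definition OM (f : T -> H) := forall U : set H, open U -> measurable (f @^-1` U).

Lemma dense_enum (D : set H) : countable D -> closure D = setT ->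
  exists e : nat -> H, forall y r, 0 < r -> exists k, `|y - e k| < r.
Proof.
move=> /pcard_surjP [e he] cD; exists e => y r r0.
have : closure D y by rewrite cD.
rewrite /closure /= => /(_ (ball y r) (nbhsx_ballx _ _ r0)) [z [Dz byz]].
have [k _ ekz] := he z Dz.
by exists k; move: byz; rewrite -ball_normE /= -ekz.
Qed.

Lemma OM_add (f g : T -> H) (D : set H) : countable D -> closure D = setT ->
  OM f -> OM g -> OM (fun x => f x + g x).
Proof.
move=> cD clD hf hg U oU.
have [e he] := dense_enum cD clD.
pose r (k : nat) : R := (k.+1%:R)^-1.
have r0 k : 0 < r k by rewrite /r invr_gt0 ltr0n.
pose piece a b k := [set x | ball (e a + e b) (2 * r k) `<=` U /\
   (`|e a - f x| < r k /\ `|e b - g x| < r k)].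
have -> : (fun x => f x + g x) @^-1` U = \bigcup_a \bigcup_b \bigcup_k piece a b k.
  apply/seteqP; split => x /=.
  - move=> Ux.
    have : nbhs (f x + g x) U by apply: open_nbhs_nbhs; split.
    move=> /nbhs_ballP [eps eps0 bU].
    have [k hk] : exists k : nat, 4 * r k < eps.
      exists (Num.truncn (4 / eps)); rewrite /r.
      have h1 := Num.Theory.truncnS_gt (4 / eps).
      rewrite -ltr_pdivlMr ?invr_gt0 ?ltr0n // invrK.
      by rewrite -ltr_pdivrMl // mulrC.
    have [a ha] := he (f x) (r k) (r0 k).
    have [b hb] := he (g x) (r k) (r0 k).
    exists a => //; exists b => //; exists k => //; split; last first.
      by split; rewrite distrC.
    move=> z; rewrite -ball_normE /= => hz; apply: bU.
    rewrite -ball_normE /=.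
    have -> : f x + g x - z = (f x - e a) + (g x - e b) + (e a + e b - z).
      by rewrite [in RHS](addrACA (f x)) -opprD [in RHS]addrA subrK.
    rewrite (le_lt_trans (ler_normD _ _)) // (le_lt_trans (lerD (ler_normD _ _) (lexx _))) //.
    apply: (lt_trans _ hk).
    have -> : 4 * r k = r k + r k + 2 * r k by lra.
    by rewrite ltrD // ltrD.
  - move=> [a _ [b _ [k _ [bU [ha hb]]]]]; apply: bU.
    rewrite -ball_normE /=.
    have -> : e a + e b - (f x + g x) = (e a - f x) + (e b - g x).
      by rewrite opprD addrACA.
    rewrite (le_lt_trans (ler_normD _ _)) // mulr2n mulrDl mul1r.
    by rewrite ltrD.
apply: bigcupT_measurable => a; apply: bigcupT_measurable => b.
apply: bigcupT_measurable => k.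
have [bU|bU] := pselect (ball (e a + e b) (2 * r k) `<=` U); last first.
  by rewrite (_ : piece a b k = set0) //; apply/seteqP; split => x // [].
have -> : piece a b k = f @^-1` ball (e a) (r k) `&` g @^-1` ball (e b) (r k).
  apply/seteqP; split => x /=; rewrite -!ball_normE /=.
    by case=> _ [].
  by case=> h1 h2; split.
by apply: measurableI; [apply: hf|apply: hg]; exact: ball_open.
Qed.



Lemma OM_re (f : T -> H) : random_element f -> OM f.
Proof. by move=> rf U oU; apply: rf; apply: sub_gen_smallest. Qed.

Lemma OM_scale (f : T -> H) (c : R) : OM f -> OM (fun x => c *: f x).
Proof.
move=> hf U oU.
have -> : (fun x => c *: f x) @^-1` U = f @^-1` ((fun v : H => c *: v) @^-1` U) by [].
apply: hf; apply: open_comp => // v _; exact: scaler_continuous.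
Qed.

Lemma OM_cst (v : H) : OM (fun _ => v).
Proof.
move=> U _; have [Uv|Uv] := pselect (U v).
  by rewrite (_ : _ @^-1` _ = setT) //; apply/seteqP; split.
by rewrite (_ : _ @^-1` _ = set0) //; apply/seteqP; split.
Qed.

Lemma OM_norm (f : T -> H) : OM f -> measurable_fun setT (fun x => `|f x|).
Proof.
move=> hf _; apply: (measurability _ (measurable_realfun.RGenOInfty.measurableE R)) => //.
move=> /= _ [_ [r ->] <-]; rewrite setTI.
have -> : (fun x => `|f x|) @^-1` `]r, +oo[%classic = f @^-1` [set v : H | r < `|v|].
  by apply/seteqP; split => x /=; rewrite in_itv /= andbT.
apply: hf.
have -> : [set v : H | r < `|v|] = (fun v : H => `|v|) @^-1` `]r, +oo[%classic.
  by apply/seteqP; split => x /=; rewrite in_itv /= andbT.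
apply: open_comp; last exact: interval_open.
move=> v _; exact: norm_continuous.
Qed.

End OM.

Section Q.
Variable R : realType.

Definition cnt (dl t : R) (N : nat) : nat := (\sum_(0 <= j < N) nat_of_bool ((j.+1%:R * dl <= t)%R))%N.

Lemma cnt_spec dl t N : 0 < dl ->
  [/\ (cnt dl t N <= N)%N, (cnt dl t N = 0%N \/ (cnt dl t N)%:R * dl <= t) &
      (cnt dl t N = N \/ t < (cnt dl t N).+1%:R * dl)].
Proof.
move=> dl0; elim: N => [|N [h1 h2 h3]]; first by rewrite /cnt big_geq //; split => //; left.
rewrite /cnt big_nat_recr //= -/(cnt dl t N).
case: (leP (N.+1%:R * dl) t) => hN /=.
- have cN : cnt dl t N = N.
    case: h3 => // ht; apply/eqP; rewrite eqn_leq h1 /= leqNgt; apply/negP => hlt.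
    have : (cnt dl t N).+1%:R * dl <= N%:R * dl by rewrite ler_pM2r // ler_nat.
    have : N%:R * dl < N.+1%:R * dl by rewrite ltr_pM2r // ltr_nat.
    lra.
  by rewrite cN addn1; split => //; [right|left].
- rewrite addn0; split => //; first exact: leqW.
  by case: h3 => [->|]; right.
Qed.

Lemma cnt_mono dl N s t : s <= t -> (cnt dl s N <= cnt dl t N)%N.
Proof.
move=> st; apply: leq_sum => j _.
by case: (leP _ s) => //= h; rewrite (le_trans h st).
Qed.

Lemma cnt0 dl t N : 0 < dl -> t <= 0 -> (cnt dl t N)%:R * dl = 0.
Proof.
move=> dl0 t0; have [_ [->|h] _] := cnt_spec t N dl0; first by rewrite mul0r.
have : 0 <= (cnt dl t N)%:R * dl by rewrite mulr_ge0 // ltW.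
lra.
Qed.

Lemma cnt_le_t dl t N : 0 < dl -> 0 <= t -> (cnt dl t N)%:R * dl <= t.
Proof.
by move=> dl0 t0; have [_ [->|//] _] := cnt_spec t N dl0; rewrite mulr0n mul0r.
Qed.

Lemma cnt_ge0 dl t N : 0 < dl -> 0 <= (cnt dl t N)%:R * dl.
Proof. by move=> dl0; rewrite mulr_ge0 // ltW. Qed.

Definition qn (k : nat) (y : R) : R :=
  (cnt (k.+1%:R)^-1 y (k.+1 ^ 2))%:R * (k.+1%:R)^-1 -
  (cnt (k.+1%:R)^-1 (- y) (k.+1 ^ 2))%:R * (k.+1%:R)^-1.

Lemma dl_gt0 (k : nat) : 0 < (k.+1%:R : R)^-1.
Proof. by rewrite invr_gt0 ltr0n. Qed.

Lemma NdlE (k : nat) : (k.+1 ^ 2)%N%:R * (k.+1%:R : R)^-1 = k.+1%:R.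
Proof. by rewrite natrX expr2 mulrK // unitfE pnatr_eq0. Qed.

Lemma cntS dl t N : (cnt dl t N).+1%:R * dl = (cnt dl t N)%:R * dl + dl.
Proof. by rewrite -addn1 natrD mulrDl mul1r. Qed.

Lemma cnt_le dl t N : 0 < dl -> (cnt dl t N)%:R * dl <= N%:R * dl.
Proof.
by move=> dl0; have [h _ _] := cnt_spec t N dl0; rewrite ler_pM2r // ler_nat.
Qed.

Lemma qn_mono k : {homo qn k : s t / s <= t}.
Proof.
move=> s t st; rewrite /qn; apply: lerB.
  by rewrite ler_pM2r ?dl_gt0 // ler_nat cnt_mono.
by rewrite ler_pM2r ?dl_gt0 // ler_nat cnt_mono // lerN2.
Qed.

Lemma qn_meas k : measurable_fun setT (qn k).
Proof. exact: nondecreasing_measurable (qn_mono k). Qed.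

Lemma qn_cases k y :
  let a := (cnt (k.+1%:R)^-1 y (k.+1 ^ 2))%:R * (k.+1%:R)^-1 in
  let b := (cnt (k.+1%:R)^-1 (- y) (k.+1 ^ 2))%:R * (k.+1%:R)^-1 in
  (0 <= y /\ b = 0 /\ a <= y) \/ (y < 0 /\ a = 0 /\ b <= - y).
Proof.
move=> a b; have dl0 := dl_gt0 k.
have [yp|yn] := leP 0 y; [left|right]; split => //; split.
- by apply: cnt0 => //; rewrite oppr_le0.
- exact: cnt_le_t.
- exact: cnt0 (ltW yn).
- by apply: cnt_le_t => //; rewrite oppr_ge0 ltW.
Qed.

Lemma prod_aux (a b y : R) : 0 <= a -> 0 <= b ->
  (0 <= y /\ b = 0 /\ a <= y) \/ (y < 0 /\ a = 0 /\ b <= - y) ->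
  0 <= (a - b) * (y - (a - b)).
Proof.
move=> a0 b0 [[y0 [-> ay]]|[y0 [-> yb]]].
  by rewrite subr0; apply: mulr_ge0 => //; lra.
by rewrite sub0r mulNr -mulrN; apply: mulr_ge0 => //; lra.
Qed.

Lemma qn_prod k y : 0 <= qn k y * (y - qn k y).
Proof.
rewrite /qn; apply: prod_aux; [exact: cnt_ge0 (dl_gt0 k)|exact: cnt_ge0 (dl_gt0 k)|].
exact: qn_cases.
Qed.

Lemma close_aux (a b y K dl : R) : 0 < dl -> 0 <= a -> 0 <= b ->
  (0 <= y /\ b = 0 /\ a <= y) \/ (y < 0 /\ a = 0 /\ b <= - y) ->
  (a = K \/ y < a + dl) -> (b = K \/ - y < b + dl) -> `|y| <= K ->
  `|y - (a - b)| <= dl.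
Proof.
move=> dl0 a0 b0 hc ha hb; rewrite !ler_norml => /andP [yK1 yK2].
apply/andP; case: hc => [[y0 [bE ay]]|[y0 [aE yb]]]; rewrite ?bE ?aE in ha hb *;
  case: ha; case: hb; lra.
Qed.

Lemma bnd_aux (a b K : R) : 0 <= b -> 0 <= a -> b <= K -> a <= K -> `|a - b| <= K.
Proof. by move=> *; rewrite ler_norml; apply/andP; split; lra. Qed.

Lemma qn_bnd k y : `|qn k y| <= k.+1%:R.
Proof.
have dl0 := dl_gt0 k; rewrite /qn.
have := cnt_le y (k.+1 ^ 2) dl0; have := cnt_le (-y) (k.+1 ^ 2) dl0.
rewrite NdlE.
have := cnt_ge0 y (k.+1 ^ 2) dl0; have := cnt_ge0 (-y) (k.+1 ^ 2) dl0.
exact: bnd_aux.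
Qed.

Lemma qn_close k y : `|y| <= k.+1%:R -> `|y - qn k y| <= (k.+1%:R)^-1.
Proof.
have dl0 := dl_gt0 k.
have [_ _ h3] := cnt_spec y (k.+1 ^ 2) dl0.
have [_ _ h3'] := cnt_spec (- y) (k.+1 ^ 2) dl0.
rewrite /qn; apply: (close_aux dl0 (cnt_ge0 _ _ dl0) (cnt_ge0 _ _ dl0) (qn_cases k y)).
- by case: h3 => [->|h]; [left; exact: NdlE|right; rewrite -cntS].
- by case: h3' => [->|h]; [left; exact: NdlE|right; rewrite -cntS].
Qed.

Lemma qn_cvg y : qn k y @[k --> \oo] --> y.
Proof.
apply/cvgrPdist_le => eps eps0.
exists (Num.truncn (`|y| + eps^-1)) => // k /= hk.
have h := Num.Theory.truncnS_gt (`|y| + eps^-1).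
have : (Num.truncn (`|y| + eps^-1)).+1%:R <= k.+1%:R :> R by rewrite ler_nat.
move=> hk'.
have e1 : 0 < eps^-1 by rewrite invr_gt0.
have := normr_ge0 y => ny.
have hc : `|y| <= k.+1%:R by lra.
apply: le_trans (qn_close hc) _.
rewrite -[eps]invrK lef_pV2 ?posrE ?ltr0n ?invr_gt0 //; have := normr_ge0 y; lra.
Qed.

End Q.

Lemma limn_einf_le (R : realType) (v : (\bar R)^nat) (c : \bar R) :
  (forall n, (v n <= c)%E) -> (limn_einf v <= c)%E.
Proof.
move=> h; rewrite limn_einf_lim; apply: lime_le; first exact: is_cvg_einfs.
apply: nearW => n; apply: ge_ereal_inf; exists (v n) => //.
by exists n => //=.
Qed.

Lemma OM_sum d (T : measurableType d) (R : realType) (H : normedModType R)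
  (D : set H) (s : seq nat) (F : nat -> T -> H) :
  countable D -> closure D = setT ->
  (forall j, j \in s -> OM (F j)) -> OM (fun x => \sum_(j <- s) F j x).
Proof.
move=> cD clD; elim: s => [|h t ih] hs.
  under eq_fun do rewrite big_nil; exact: OM_cst.
under eq_fun do rewrite big_cons.
apply: (OM_add cD clD); first by apply: hs; rewrite mem_head.
by apply: ih => j jt; apply: hs; rewrite in_cons jt orbT.
Qed.



Section aux.
Variable R : realType.

Lemma cs_aux (s : seq nat) (f : nat -> R) (a : R) :
  2 * a * (\sum_(j <- s) f j) <= (size s)%:R * a ^+ 2 + \sum_(j <- s) f j ^+ 2.
Proof.
elim: s => [|h t ih]; first by rewrite !big_nil /= mulr0 mul0r addr0.
rewrite !big_cons /= (_ : (size t).+1%:R = (size t)%:R + 1 :> R); last first.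
  by rewrite -addn1 natrD.
have := sqr_ge0 (a - f h); rewrite !expr2 in ih * => h0.
nra.
Qed.

Lemma cs_ineq (s : seq nat) (f : nat -> R) :
  (\sum_(j <- s) f j) ^+ 2 <= (size s)%:R * \sum_(j <- s) f j ^+ 2.
Proof.
elim: s => [|h t ih]; first by rewrite !big_nil expr2 mulr0.
rewrite !big_cons /= (_ : (size t).+1%:R = (size t)%:R + 1 :> R); last first.
  by rewrite -addn1 natrD.
have := cs_aux t f (f h); rewrite !expr2 in ih * => h0.
nra.
Qed.

End aux.

Section CE.
Context d (T : measurableType d) (R : realType) (P : probability T R).
Variable C : set (set T).
Hypothesis hC : C `<=` measurable.

Lemma sC_meas : <<s C >> `<=` measurable.
Proof. by apply: smallest_sub => //; exact: sigma_algebra_measurable. Qed.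

Definition Gm (Y : T -> R) := forall B : set R, measurable B -> <<s C >> (Y @^-1` B).

Lemma GmE Y : Gm Y <-> measurable_fun [set: g_sigma_algebraType C] Y.
Proof.
split => [h _ B mB|h B mB]; first by rewrite setTI; exact: h.
by have := h measurableT B mB; rewrite setTI.
Qed.

Lemma Gm_meas Y : Gm Y -> measurable_fun [set: T] Y.
Proof. by move=> h _ B mB; rewrite setTI; apply: sC_meas; exact: h. Qed.

Lemma Gm_add Y1 Y2 : Gm Y1 -> Gm Y2 -> Gm (fun x => Y1 x + Y2 x).
Proof. by move=> /GmE h1 /GmE h2; apply/GmE; exact: measurable_realfun.measurable_funD. Qed.

Lemma Gm_scale k Y : Gm Y -> Gm (fun x => k * Y x).
Proof.
move=> /GmE h; apply/GmE.
exact: measurable_realfun.measurable_funM (measurable_cst k) h.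
Qed.

Lemma Gm_cst k : Gm (fun _ => k).
Proof. by apply/GmE; exact: measurable_cst. Qed.

Definition CE X Y := [/\ is_cond_exp P <<s C >> X Y, measurable_fun setT X &
  P.-integrable setT (EFin \o X)].

Lemma CE_Gm X Y : CE X Y -> Gm Y.
Proof. by case=> [[]]. Qed.

Lemma CE_intY X Y : CE X Y -> P.-integrable setT (EFin \o Y).
Proof. by case=> [[]]. Qed.

Lemma CE_eq X Y A : CE X Y -> <<s C >> A ->
  (\int[P]_(x in A) (Y x)%:E = \int[P]_(x in A) (X x)%:E)%E.
Proof. by case=> [[_ _ h]] _ _; exact: h. Qed.

Lemma intS A (f : T -> \bar R) : measurable A -> P.-integrable setT f ->
  P.-integrable A f.
Proof. by move=> mA hf; exact: integrableS measurableT mA (subsetT _) hf. Qed.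

Lemma int_EFinD (f g : T -> R) : P.-integrable setT (EFin \o f) ->
  P.-integrable setT (EFin \o g) ->
  P.-integrable setT (EFin \o (fun x => f x + g x)).
Proof.
move=> hf hg; have := integrableD measurableT hf hg.
by apply: eq_integrable => // x _ /=; rewrite EFinD.
Qed.

Lemma int_EFinZ (f : T -> R) k : P.-integrable setT (EFin \o f) ->
  P.-integrable setT (EFin \o (fun x => k * f x)).
Proof.
move=> hf; have := integrableZl measurableT k hf.
by apply: eq_integrable => // x _ /=; rewrite EFinM.
Qed.

Lemma intD_on A (f g : T -> R) : measurable A -> P.-integrable setT (EFin \o f) ->
  P.-integrable setT (EFin \o g) ->
  (\int[P]_(x in A) ((f x + g x)%:E) =
   \int[P]_(x in A) (f x)%:E + \int[P]_(x in A) (g x)%:E)%E.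
Proof.
move=> mA hf hg.
under eq_integral do rewrite EFinD.
have := integralD_EFin mA (intS mA hf) (intS mA hg).
by [].
Qed.

Lemma intZ_on A (f : T -> R) k : measurable A -> P.-integrable setT (EFin \o f) ->
  (\int[P]_(x in A) ((k * f x)%:E) = k%:E * \int[P]_(x in A) (f x)%:E)%E.
Proof.
move=> mA hf.
under eq_integral do rewrite EFinM.
by have := integralZl mA (intS mA hf) k.
Qed.

Lemma CE_add X1 Y1 X2 Y2 : CE X1 Y1 -> CE X2 Y2 ->
  CE (fun x => X1 x + X2 x) (fun x => Y1 x + Y2 x).
Proof.
move=> h1 h2; have [[g1 i1 e1] m1 j1] := h1; have [[g2 i2 e2] m2 j2] := h2.
split; [split|exact: measurable_realfun.measurable_funD|exact: int_EFinD].
- by move=> B mB; apply: Gm_add.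
- exact: int_EFinD.
- move=> A cA; have mA := sC_meas cA.
  by rewrite !intD_on // e1 // e2.
Qed.

Lemma CE_scale X Y k : CE X Y -> CE (fun x => k * X x) (fun x => k * Y x).
Proof.
move=> [[g1 i1 e1] m1 j1].
split; [split|exact: measurable_realfun.measurable_funM|exact: int_EFinZ].
- by move=> B mB; apply: Gm_scale.
- exact: int_EFinZ.
- by move=> A cA; have mA := sC_meas cA; rewrite !intZ_on // e1.
Qed.

Lemma CE_0 : CE (fun _ => 0) (fun _ => 0).
Proof.
have i0 : P.-integrable setT (EFin \o (fun _ : T => (0:R))).
  exact: finite_measure_integrable_cst.
split; [split|exact: measurable_cst|exact: i0] => //.
by move=> B mB; apply: Gm_cst.
Qed.

Lemma CE_sum (I : eqType) (s : seq I) (X Y : I -> T -> R) :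
  (forall j, j \in s -> CE (X j) (Y j)) ->
  CE (fun x => \sum_(j <- s) X j x) (fun x => \sum_(j <- s) Y j x).
Proof.
elim: s => [|h t ih] hs.
  by under eq_fun do rewrite big_nil; under [X in CE _ X]eq_fun do rewrite big_nil; exact: CE_0.
under eq_fun do rewrite big_cons; under [X in CE _ X]eq_fun do rewrite big_cons.
apply: CE_add; first by apply: hs; rewrite mem_head.
by apply: ih => j js; apply: hs; rewrite in_cons js orbT.
Qed.


Lemma intB_on A (f g : T -> R) : measurable A -> P.-integrable setT (EFin \o f) ->
  P.-integrable setT (EFin \o g) ->
  (\int[P]_(x in A) ((f x - g x)%:E) =
   \int[P]_(x in A) (f x)%:E - \int[P]_(x in A) (g x)%:E)%E.
Proof.
move=> mA hf hg.
under eq_integral do rewrite EFinB.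
by have := integralB_EFin mA (intS mA hf) (intS mA hg).
Qed.

Lemma int_fin A (f : T -> R) : measurable A -> P.-integrable setT (EFin \o f) ->
  (\int[P]_(x in A) (f x)%:E \is a fin_num)%E.
Proof. by move=> mA hf; apply: integrable_fin_num => //; exact: intS. Qed.

Lemma Gm_cmp Z1 Z2 : Gm Z1 -> Gm Z2 -> P.-integrable setT (EFin \o Z1) ->
  P.-integrable setT (EFin \o Z2) ->
  (forall B, <<s C >> B -> (\int[P]_(x in B) (Z1 x)%:E <= \int[P]_(x in B) (Z2 x)%:E)%E) ->
  {ae P, forall x, Z1 x <= Z2 x}.
Proof.
move=> g1 g2 i1 i2 hB.
pose Z := fun x => Z1 x - Z2 x.
have gZ : Gm Z by apply: Gm_add => //; under eq_fun do rewrite -mulN1r; apply: Gm_scale.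
pose B := Z @^-1` `]0, +oo[%classic.
have cB : <<s C >> B by apply: gZ; exact: measurable_itv.
have mB := sC_meas cB.
have mZ : measurable_fun B (EFin \o Z : T -> \bar R).
  by apply/measurable_EFinP; apply: measurable_funS (Gm_meas gZ).
have h0 : (\int[P]_(x in B) `|(EFin \o Z) x| = 0)%E.
  apply/eqP; rewrite eq_le; apply/andP; split; last first.
    by apply: integral_ge0 => x _; exact: abse_ge0.
  have -> : (\int[P]_(x in B) `|(EFin \o Z) x| = \int[P]_(x in B) (Z x)%:E)%E.
    apply: eq_integral => x /set_mem; rewrite /B /= in_itv /= andbT => zx.
    by rewrite gtr0_norm.
  rewrite intB_on // sube_le0; exact: hB.
have := (ae_eq_integral_abs P mB mZ).1 h0.
apply: filterS => x hx; rewrite leNgt; apply/negP => zx.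
have Bx : B x by rewrite /B /= in_itv /= andbT subr_gt0.
by move: (hx Bx) => /= /eqP; rewrite eqe subr_eq0 => /eqP zx'; move: zx; rewrite zx' ltxx.
Qed.

Lemma CE_le X1 Y1 X2 Y2 : CE X1 Y1 -> CE X2 Y2 -> (forall x, X1 x <= X2 x) ->
  {ae P, forall x, Y1 x <= Y2 x}.
Proof.
move=> h1 h2 le12; apply: Gm_cmp; [exact: CE_Gm h1|exact: CE_Gm h2|
  exact: CE_intY h1|exact: CE_intY h2|].
move=> B cB; rewrite (CE_eq h1 cB) (CE_eq h2 cB).
have mB := sC_meas cB; case: h1 h2 => _ _ i1 [_ _ i2].
apply: le_integral => //; [exact: intS|exact: intS|].
by move=> x _; rewrite lee_fin.
Qed.

Lemma CE_Zint X Y : CE X Y -> P.-integrable setT (EFin \o (fun x => Y x - X x)).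
Proof.
move=> h; apply: int_EFinD; first exact: CE_intY h.
case: h => _ _ i; under eq_fun do rewrite -mulN1r; exact: int_EFinZ.
Qed.

Lemma CE_Zmeas X Y : CE X Y -> measurable_fun setT (fun x => Y x - X x).
Proof.
move=> h; apply: measurable_realfun.measurable_funB; first exact: Gm_meas (CE_Gm h).
by case: h.
Qed.

Lemma CE_ind X Y A B : CE X Y -> <<s C >> A -> <<s C >> B ->
  (\int[P]_(x in A) ((\1_B x) * (Y x - X x))%:E = 0)%E.
Proof.
move=> h cA cB; have mA := sC_meas cA; have mB := sC_meas cB.
have cAB : <<s C >> (A `&` B).
  exact: (@measurableI _ (g_sigma_algebraType C) A B cA cB).
have mAB := sC_meas cAB.
transitivity (\int[P]_(x in A `&` B) (Y x - X x)%:E)%E.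
  rewrite integral_mkcondr; apply: eq_integral => x _.
  rewrite /patch indicE; case: ifP => _; by rewrite ?mul1r ?mul0r.
rewrite intB_on //; [|exact: CE_intY h|by case: h].
rewrite (CE_eq h cAB) subee //; apply: int_fin => //; by case: h.
Qed.

Lemma ind_bool (p : T -> bool) x : \1_[set x | p x] x = (p x)%:R :> R.
Proof. by rewrite indicE (_ : (x \in _) = p x) //; apply/idP/idP => [/set_mem|/mem_set]. Qed.

Lemma CE_q X Y A (k : nat) : CE X Y -> <<s C >> A ->
  (\int[P]_(x in A) (qn k (Y x) * (Y x - X x))%:E = 0)%E.
Proof.
move=> h cA; have mA := sC_meas cA.
have gY := CE_Gm h; have mZ := CE_Zmeas h; have iZ := CE_Zint h.
pose t (j : nat) : R := j.+1%:R * (k.+1%:R)^-1.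
pose Bp j := [set x | t j <= Y x]; pose Bn j := [set x | t j <= - Y x].
have cBp j : <<s C >> (Bp j).
  have -> : Bp j = Y @^-1` `[t j, +oo[%classic.
    by apply/seteqP; split => x /=; rewrite in_itv /= andbT.
  by apply: gY; exact: measurable_itv.
have cBn j : <<s C >> (Bn j).
  have -> : Bn j = Y @^-1` `]-oo, - t j]%classic.
    by apply/seteqP; split => x /=; rewrite in_itv /= lerNr.
  by apply: gY; exact: measurable_itv.
pose f j x := ((k.+1%:R)^-1 * (\1_(Bp j) x * (Y x - X x)) -
               (k.+1%:R)^-1 * (\1_(Bn j) x * (Y x - X x)))%:E.
have iB B : <<s C >> B -> P.-integrable setT (EFin \o (fun x => \1_B x * (Y x - X x))).
  move=> cB; apply: (le_integrable measurableT _ _ iZ).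
    apply/measurable_EFinP; apply: measurable_realfun.measurable_funM => //.
    exact: measurable_indic (sC_meas cB).
  move=> x _ /=; rewrite lee_fin normrM indicE.
  by case: (_ \in _); rewrite ?normr1 ?normr0 ?mul1r ?mul0r.
have if_ j : P.-integrable A (f j).
  apply: intS => //; rewrite /f.
  have := int_EFinD (int_EFinZ (k.+1%:R)^-1 (iB _ (cBp j)))
    (int_EFinZ (-1) (int_EFinZ (k.+1%:R)^-1 (iB _ (cBn j)))).
  by apply: eq_integrable => // x _ /=; rewrite mulN1r.
transitivity (\int[P]_(x in A) (\sum_(j <- index_iota 0 (k.+1 ^ 2)) f j x))%E.
  apply: eq_integral => x _; rewrite /f sumEFin; congr EFin.
  rewrite /qn /cnt !natr_sum mulrBl !mulr_suml -sumrB; apply: eq_bigr => j _.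
  rewrite !ind_bool; ring.
rewrite integral_sum //; apply: big1 => j _; rewrite /f.
rewrite intB_on //; [|exact: int_EFinZ (iB _ (cBp j))|exact: int_EFinZ (iB _ (cBn j))].
rewrite !intZ_on //; [|exact: iB|exact: iB].
by rewrite !CE_ind // mule0 subee.
Qed.

Lemma CE_RJ X Y A : CE X Y -> <<s C >> A ->
  (\int[P]_(x in A) (((X x - Y x) ^+ 2 + Y x ^+ 2)%:E) <=
   \int[P]_(x in A) ((X x ^+ 2)%:E))%E.
Proof.
move=> h cA; have mA := sC_meas cA.
have mY := Gm_meas (CE_Gm h); have mX : measurable_fun setT X by case: h.
have [->|fin] := eqVneq (\int[P]_(x in A) (X x ^+ 2)%:E)%E +oo%E; first exact: leey.
have mX2 : measurable_fun setT (fun x => X x ^+ 2) by exact: measurable_funX.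
have iX2 : P.-integrable A (EFin \o (fun x => X x ^+ 2)).
  apply/integrableP; split.
    by apply/measurable_EFinP; apply: measurable_funS mX2.
  rewrite (@eq_integral _ _ _ _ _ (fun x => (X x ^+ 2)%:E)); first by rewrite ltey.
  by move=> x _ /=; rewrite ger0_norm // sqr_ge0.
pose q k x := qn k (Y x).
pose hk k x := (((X x - q k x) ^+ 2 + q k x ^+ 2)%:E : \bar R).
have mq k : measurable_fun setT (q k) := measurableT_comp (qn_meas k) mY.
have mhk k : measurable_fun A (hk k).
  apply/measurable_EFinP; apply: measurable_funS (_ : measurable_fun setT _) => //.
  apply: measurable_realfun.measurable_funD; apply: measurable_funX => //.
  exact: measurable_realfun.measurable_funB.
have hk0 k x : A x -> (0 <= hk k x)%E.
  by move=> _; rewrite lee_fin; apply: addr_ge0; apply: sqr_ge0.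
have hle k : (\int[P]_(x in A) hk k x <= \int[P]_(x in A) (X x ^+ 2)%:E)%E.
  have ib0 : P.-integrable setT (EFin \o (fun x => q k x * (Y x - X x))).
    apply: (le_integrable measurableT _ _ (int_EFinZ k.+1%:R (CE_Zint h))).
      apply/measurable_EFinP; apply: measurable_realfun.measurable_funM => //.
      exact: CE_Zmeas h.
    move=> x _ /=; rewrite lee_fin normrM [`|k.+1%:R * _|]normrM (ger0_norm (ler0n _ _)).
    by rewrite ler_wpM2r // qn_bnd.
  have ib : P.-integrable A (EFin \o (fun x => 2 * (q k x * (Y x - X x)))).
    by apply: intS => //; apply: int_EFinZ.
  apply: (@le_trans _ _ (\int[P]_(x in A) ((X x ^+ 2 + 2 * (q k x * (Y x - X x)))%:E))%E).
    apply: (ge0_le_integral _ mA (hk0 k) (mhk k)).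
    - apply/measurable_EFinP; apply: measurable_funS (_ : measurable_fun setT _) => //.
      apply: measurable_realfun.measurable_funD => //.
      apply: measurable_realfun.measurable_funM => //.
      apply: measurable_realfun.measurable_funM => //.
      exact: CE_Zmeas h.
    - move=> x _; rewrite lee_fin -subr_ge0.
      have -> : X x ^+ 2 + 2 * (q k x * (Y x - X x)) - ((X x - q k x) ^+ 2 + q k x ^+ 2)
               = 2 * (q k x * (Y x - q k x)) by ring.
      by apply: mulr_ge0 => //; exact: qn_prod.
  under eq_integral do rewrite EFinD.
  have -> := integralD_EFin mA iX2 ib.
  rewrite intZ_on // CE_q // mule0 adde0.
  done.
have cvh x : hk k x @[k --> \oo] --> (((X x - Y x) ^+ 2 + Y x ^+ 2)%:E : \bar R).
  apply: cvg_EFin; first by apply: nearW => k.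
  rewrite /hk /=; rewrite !expr2.
  have hq := @qn_cvg _ (Y x).
  apply: cvgD; last exact: cvgM.
  by apply: cvgM; apply: cvgB => //; exact: cvg_cst.
rewrite (_ : (\int[P]_(x in A) _)%E = \int[P]_(x in A) limn_einf (hk^~ x))%E; last first.
  apply: eq_integral => x _; rewrite is_cvg_limn_einfE; last first.
    by apply/cvg_ex; eexists; exact: cvh.
  by rewrite (cvg_lim _ (cvh x)).
apply: le_trans (fatou P mA mhk hk0) _.
exact: limn_einf_le.
Qed.

End CE.

Lemma CE_tower d (T : measurableType d) (R : realType) (P : probability T R)
  (C C' : set (set T)) X U V :
  C `<=` measurable -> <<s C' >> `<=` <<s C >> ->
  CE P C' X V -> CE P C X U -> CE P C' U V.
Proof.
move=> hC sub [[g1 i1 e1] m1 j1] hU.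
split; [split|exact: Gm_meas (CE_Gm hU)|exact: CE_intY hU] => //.
by move=> A cA; rewrite e1 // (CE_eq hU (sub _ cA)).
Qed.


Lemma int_sum d (T : measurableType d) (R : realType) (P : probability T R)
  (s : seq nat) (F : nat -> T -> R) :
  (forall j, j \in s -> P.-integrable setT (EFin \o F j)) ->
  P.-integrable setT (EFin \o (fun x => \sum_(j <- s) F j x)).
Proof.
elim: s => [|h t ih] hs.
  under eq_fun do rewrite big_nil; exact: finite_measure_integrable_cst.
under eq_fun do rewrite big_cons.
apply: (int_EFinD (P:=P)); first by apply: hs; rewrite mem_head.
by apply: ih => j jt; apply: hs; rewrite in_cons jt orbT.
Qed.

Lemma meas_sum d (T : measurableType d) (R : realType)
  (s : seq nat) (F : nat -> T -> R) :
  (forall j, j \in s -> measurable_fun setT (F j)) ->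
  measurable_fun setT (fun x => \sum_(j <- s) F j x).
Proof.
elim: s => [|h t ih] hs.
  under eq_fun do rewrite big_nil; exact: measurable_cst.
under eq_fun do rewrite big_cons.
apply: measurable_realfun.measurable_funD; first by apply: hs; rewrite mem_head.
by apply: ih => j jt; apply: hs; rewrite in_cons jt orbT.
Qed.

Unset Implicit Arguments. Set Strict Implicit. Set Printing Implicit Defensive.

Theorem lemma2 (d : measure_display) (T : measurableType d) (R : realType)
  (P : probability T R) (H : completeNormedModType R)
  (n m i : nat) (eps : nat -> T -> H) (W : nat -> R)
  (cS1 cS0 cT1 cT0 e : T -> R) (a b c : nat -> T -> R) :
  separable_hilbert H ->
  (forall j, (1 <= j <= n)%N -> random_element (eps j)) ->
  (forall j, (1 <= j <= n)%N ->
     P.-integrable [set: T] (fun x => (`|eps j x| ^+ 2)%:E)) ->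
  (forall j, (1 <= j <= n)%N -> 0 <= W j) ->
  (1 <= m)%N -> (1 <= i <= n)%N ->
  let G := natural_filtration eps in
  let eta := fun j x => W j *: eps j x in
  let S := fun x => \sum_(1 <= j < n.+1) eta j x in
  let Ti := fun x => S x - \sum_(i <= j < minn (i + m) n.+1) eta j x in
  is_cond_exp P (G i) (fun x => `|S x|) cS1 ->
  is_cond_exp P (G i.-1) (fun x => `|S x|) cS0 ->
  is_cond_exp P (G i) (fun x => `|Ti x|) cT1 ->
  is_cond_exp P (G i.-1) (fun x => `|Ti x|) cT0 ->
  let di := fun x => cS1 x - cS0 x - cT1 x + cT0 x in
  (forall j, (i <= j < minn (i + m) n.+1)%N ->
     is_cond_exp P (G i) (fun x => `|eta j x|) (a j)) ->
  (forall j, (i <= j < minn (i + m) n.+1)%N ->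
     is_cond_exp P (G i.-1) (fun x => `|eta j x|) (b j)) ->
  (forall j, (i <= j < minn (i + m) n.+1)%N ->
     is_cond_exp P (G i.-1) (fun x => `|eta j x| ^+ 2) (c j)) ->
  is_cond_exp P (G i.-1) (fun x => di x ^+ 2) e ->
  {ae P, forall x,
     `|di x| <= \sum_(i <= j < minn (i + m) n.+1) a j x
              + \sum_(i <= j < minn (i + m) n.+1) b j x} /\
  {ae P, forall x,
     e x <= m%:R * \sum_(i <= j < minn (i + m) n.+1) c j x}.
Proof.
move=> [_ [D [cD clD]]] hre hint hW hm /andP[i1 iN] G eta S Ti
  hS1 hS0 hT1 hT0 di ha hb hc he.
pose gens k := [set A | exists j B, [/\ (1 <= j <= k)%N, borelH B &
                                         A = eps j @^-1` B] ] : set (set T).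
pose C1 := gens i; pose C0 := gens i.-1.
have hCk k : (k <= n)%N -> gens k `<=` measurable.
  move=> kn A [j [B [/andP[j1 jk] bB ->]]].
  by apply: hre => //; rewrite j1 (leq_trans jk kn).
have hC1 : C1 `<=` measurable by exact: hCk.
have hC0 : C0 `<=` measurable by apply: hCk; rewrite (leq_trans (leq_pred _) iN).
have sub01 : <<s C0 >> `<=` <<s C1 >>.
  apply: sub_smallest2r; first exact: smallest_sigma_algebra.
  move=> A [j [B [/andP[j1 jk] bB ->]]]; exists j, B; split => //.
  by rewrite j1 (leq_trans jk (leq_pred _)).
pose win := index_iota i (minn (i + m) n.+1).
have win_n j : j \in win -> (1 <= j <= n)%N.
  rewrite mem_index_iota => /andP[ij jm]; rewrite (leq_trans i1 ij) /=.
  by rewrite -ltnS (leq_trans jm) // geq_minr.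
have OMeta j : (1 <= j <= n)%N -> OM (eta j).
  by move=> hj; apply: OM_scale; apply: OM_re; exact: hre.
have OMS : OM S.
  apply: (OM_sum cD clD) => j; rewrite mem_index_iota => /andP[j1 jn].
  by apply: OMeta; rewrite j1 -ltnS.
have OMw : OM (fun x => \sum_(j <- win) eta j x).
  by apply: (OM_sum cD clD) => j /win_n; exact: OMeta.
have OMT : OM Ti.
  have -> : Ti = fun x => S x + (-1) *: \sum_(j <- win) eta j x.
    by apply: funext => x; rewrite scaleN1r.
  by apply: (OM_add cD clD) => //; exact: OM_scale.
have mS : measurable_fun setT (fun x => `|S x|) := OM_norm OMS.
have mT : measurable_fun setT (fun x => `|Ti x|) := OM_norm OMT.
have meta j : (1 <= j <= n)%N -> measurable_fun setT (fun x => `|eta j x|).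
  by move=> hj; exact: OM_norm (OMeta j hj).
have hint' j : (1 <= j <= n)%N ->
    P.-integrable [set: T] (EFin \o (fun x => `|eps j x| ^+ 2)) := hint j.
have ieps j : (1 <= j <= n)%N -> P.-integrable setT (EFin \o (fun x => `|eps j x|)).
  move=> hj.
  apply: (le_integrable measurableT _ _
    (int_EFinD (finite_measure_integrable_cst P 1 measurableT) (hint' j hj))).
    by apply/measurable_EFinP; exact: OM_norm (OM_re (hre j hj)).
  move=> x _ /=; rewrite lee_fin normr_id ger0_norm; last first.
    by apply: addr_ge0 => //; exact: sqr_ge0.
  have := normr_ge0 (eps j x); rewrite expr2; nra.
have ieta j : (1 <= j <= n)%N -> P.-integrable setT (EFin \o (fun x => `|eta j x|)).
  move=> hj; have := int_EFinZ `|W j| (ieps j hj).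
  by apply: eq_integrable => // x _ /=; rewrite /eta normrZ.
have ieta2 j : (1 <= j <= n)%N -> P.-integrable setT (EFin \o (fun x => `|eta j x| ^+ 2)).
  move=> hj; have := int_EFinZ (W j ^+ 2) (hint' j hj).
  apply: eq_integrable => // x _ /=.
  by rewrite /eta normrZ exprMn real_normK // num_real.
have iW : P.-integrable setT (EFin \o (fun x => \sum_(j <- win) `|eta j x|)).
  by apply: int_sum => j /win_n; exact: ieta.
have iS : P.-integrable setT (EFin \o (fun x => `|S x|)).
  have iSum : P.-integrable setT
      (EFin \o (fun x => \sum_(j <- index_iota 1 n.+1) `|eta j x|)).
    apply: int_sum => j; rewrite mem_index_iota => /andP[j1 jn].
    by apply: ieta; rewrite j1 -ltnS.
  apply: (le_integrable measurableT _ _ iSum).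
    by apply/measurable_EFinP.
  move=> x _ /=; rewrite lee_fin normr_id ger0_norm ?sumr_ge0 //.
  exact: ler_norm_sum.
have iT : P.-integrable setT (EFin \o (fun x => `|Ti x|)).
  apply: (le_integrable measurableT _ _ (int_EFinD iS iW)).
    by apply/measurable_EFinP.
  move=> x _ /=; rewrite lee_fin normr_id ger0_norm ?addr_ge0 ?sumr_ge0 //.
  apply: le_trans (ler_normB _ _) _; rewrite lerD2l; exact: ler_norm_sum.
have CS1 : CE P C1 (fun x => `|S x|) cS1 by split.
have CS0 : CE P C0 (fun x => `|S x|) cS0 by split.
have CT1 : CE P C1 (fun x => `|Ti x|) cT1 by split.
have CT0 : CE P C0 (fun x => `|Ti x|) cT0 by split.
have Ca j : j \in win -> CE P C1 (fun x => `|eta j x|) (a j).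
  move=> hj; split; [apply: ha; by rewrite -mem_index_iota|exact: meta (win_n _ hj)|
    exact: ieta (win_n _ hj)].
have Cb j : j \in win -> CE P C0 (fun x => `|eta j x|) (b j).
  move=> hj; split; [apply: hb; by rewrite -mem_index_iota|exact: meta (win_n _ hj)|
    exact: ieta (win_n _ hj)].
have Cc j : j \in win -> CE P C0 (fun x => `|eta j x| ^+ 2) (c j).
  move=> hj; split; [apply: hc; by rewrite -mem_index_iota| |exact: ieta2 (win_n _ hj)].
  exact: measurable_funX (meta _ (win_n _ hj)).
have CEsub (C : set (set T)) (hC : C `<=` measurable) X1 Y1 X2 Y2 :
    CE P C X1 Y1 -> CE P C X2 Y2 ->
    CE P C (fun x => X1 x - X2 x) (fun x => Y1 x - Y2 x).
  move=> h1 h2; have := CE_add hC h1 (CE_scale hC (-1) h2).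
  have E1 : (fun x => X1 x + -1 * X2 x) = (fun x => X1 x - X2 x).
    by apply: funext => x; rewrite mulN1r.
  have E2 : (fun x => Y1 x + -1 * Y2 x) = (fun x => Y1 x - Y2 x).
    by apply: funext => x; rewrite mulN1r.
  by rewrite E1 E2.
pose X := fun x => `|S x| - `|Ti x|.
pose U := fun x => cS1 x - cT1 x.
pose V := fun x => cS0 x - cT0 x.
have CE1X : CE P C1 X U := CEsub _ hC1 _ _ _ _ CS1 CT1.
have CE0X : CE P C0 X V := CEsub _ hC0 _ _ _ _ CS0 CT0.
pose sw := fun x => \sum_(j <- win) `|eta j x|.
have CE1a : CE P C1 sw (fun x => \sum_(j <- win) a j x) := CE_sum hC1 Ca.
have CE0b : CE P C0 sw (fun x => \sum_(j <- win) b j x) := CE_sum hC0 Cb.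
have hX x : `|X x| <= sw x.
  have E : S x - Ti x = \sum_(j <- win) eta j x by rewrite /Ti opprB addrC subrK.
  apply: le_trans (ler_dist_dist _ _) _; rewrite E; exact: ler_norm_sum.
have hX1 x : X x <= sw x by apply: le_trans (hX x); exact: ler_norm.
have hX2 x : -1 * X x <= sw x by rewrite mulN1r; apply: le_trans (hX x); rewrite -normrN; exact: ler_norm.
have aU1 := CE_le hC1 CE1X CE1a hX1.
have aU2 := CE_le hC1 (CE_scale hC1 (-1) CE1X) CE1a hX2.
have aV1 := CE_le hC0 CE0X CE0b hX1.
have aV2 := CE_le hC0 (CE_scale hC0 (-1) CE0X) CE0b hX2.
split.
  have aU : {ae P, forall x, U x <= \sum_(j <- win) a j x /\
                  -1 * U x <= \sum_(j <- win) a j x}.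
    by apply: (filterS2 _ _ aU1 aU2) => x h1 h2; split.
  have aV : {ae P, forall x, V x <= \sum_(j <- win) b j x /\
                  -1 * V x <= \sum_(j <- win) b j x}.
    by apply: (filterS2 _ _ aV1 aV2) => x h1 h2; split.
  apply: (filterS2 _ _ aU aV) => x [u1 u2] [v1 v2].
  rewrite /di /U /V /= in u1 u2 v1 v2 *.
  rewrite ler_norml; apply/andP; split; lra.
have CE0U : CE P C0 U V := CE_tower hC1 sub01 CE0X CE1X.
have Cmc : CE P C0 (fun x => m%:R * \sum_(j <- win) `|eta j x| ^+ 2)
    (fun x => m%:R * \sum_(j <- win) c j x) := CE_scale hC0 m%:R (CE_sum hC0 Cc).
have [ge ie ee] := he.
apply: (Gm_cmp hC0 ge (CE_Gm Cmc) ie (CE_intY Cmc)) => B cB.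
have mB := sC_meas hC0 cB.
rewrite (CE_eq Cmc cB) ee //.
have mU : measurable_fun setT U := Gm_meas hC1 (CE_Gm CE1X).
have mV : measurable_fun setT V := Gm_meas hC0 (CE_Gm CE0U).
have mX : measurable_fun setT X by case: CE1X.
have mE (f : T -> R) : measurable_fun setT f -> measurable_fun B (EFin \o f).
  by move=> mf; apply/measurable_EFinP; exact: measurable_funS mf.
have sq0 (f : T -> R) : forall x, B x -> (0 <= (f x ^+ 2)%:E)%E.
  by move=> x _; rewrite lee_fin sqr_ge0.
rewrite (_ : (\int[P]_(x in B) (di x ^+ 2)%:E)%E = (\int[P]_(x in B) ((U x - V x) ^+ 2)%:E)%E);
  last by apply: eq_integral => x _; rewrite /di /U /V; congr EFin; ring.
have s1 : (\int[P]_(x in B) ((U x - V x) ^+ 2)%:E <=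
           \int[P]_(x in B) (((U x - V x) ^+ 2 + V x ^+ 2)%:E))%E.
  apply: (ge0_le_integral P mB (sq0 (fun x => U x - V x))).
  - apply: mE; apply: measurable_funX; exact: measurable_realfun.measurable_funB.
  - apply: mE; apply: measurable_realfun.measurable_funD; apply: measurable_funX => //.
    exact: measurable_realfun.measurable_funB.
  - by move=> x _; rewrite lee_fin lerDl sqr_ge0.
have s2 := CE_RJ hC0 CE0U cB.
have s3 : (\int[P]_(x in B) ((U x ^+ 2)%:E) <=
           \int[P]_(x in B) (((X x - U x) ^+ 2 + U x ^+ 2)%:E))%E.
  apply: (ge0_le_integral P mB (sq0 U)).
  - by apply: mE; apply: measurable_funX.
  - apply: mE; apply: measurable_realfun.measurable_funD; apply: measurable_funX => //.
    exact: measurable_realfun.measurable_funB.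
  - by move=> x _; rewrite lee_fin lerDr sqr_ge0.
have s4 := CE_RJ hC1 CE1X (sub01 _ cB).
have szw : (size win <= m)%N.
  by rewrite /win /index_iota size_iota leq_subLR geq_minl.
have s5 : (\int[P]_(x in B) ((X x ^+ 2)%:E) <=
           \int[P]_(x in B) ((m%:R * \sum_(j <- win) `|eta j x| ^+ 2)%:E))%E.
  apply: (ge0_le_integral P mB (sq0 X)).
  - by apply: mE; apply: measurable_funX.
  - apply: mE; apply: measurable_realfun.measurable_funM => //.
    apply: meas_sum => j /win_n hj; apply: measurable_funX; exact: meta.
  - move=> x _; rewrite lee_fin.
    have h1 := hX1 x; have h2 := hX2 x; rewrite mulN1r in h2.
    have h3 : X x ^+ 2 <= sw x ^+ 2 by rewrite !expr2; nra.
    apply: le_trans h3 _; apply: le_trans (cs_ineq _ _) _.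
    rewrite ler_wpM2r ?ler_nat //; apply: sumr_ge0 => j _; exact: sqr_ge0.
exact: le_trans s1 (le_trans s2 (le_trans s3 (le_trans s4 s5))).
Qed.
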